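(* Let $n\ge 3$ and let $f\colon (0,4]\to\mathbb R$ be a differentiable, decreasing, and convex function. Then the vertices of a regular simplex inscribed in the unit sphere $\mathbb S^{n-2}\subset\mathbb R^{n-1}$ (i.e. $n$ points with $\langle \mathbf x_i,\mathbf x_j\rangle=-\frac{1}{n-1}$ for all $i\neq j$) attain the minimum of the largest eigenvalue $\lambda_n(L^{\mathbf x})$ of the graph Laplacian $L^{\mathbf x}$ over all configurations $\{\mathbf x_i\}_{i=1}^n$ of $n$ distinct points on $\mathbb S^{n-2}$.
   Context: For points $\mathbf x_1,\dots,\mathbf x_n\in\mathbb S^{n-2}$, the weighted adjacency matrix $W^{\mathbf x}$ is the $n\times n$ matrix with $W^{\mathbf x}_{ij}=f(|\mathbf x_i-\mathbf x_j|^2)$ for $i\ne j$ (Euclidean distance) and $W^{\mathbf x}_{ii}=0$. Let $D^{\mathbf x}$ be diagonal with $D^{\mathbf x}_{ii}=\sum_j W^{\mathbf x}_{ij}$; the graph Laplacian is $L^{\mathbf x}=D^{\mathbf x}-W^{\mathbf x}$, with eigenvalues $\lambda_1(L^{\mathbf x})\le\dots\le\lambda_n(L^{\mathbf x})$, so $\lambda_n(L^{\mathbf x})=\max_{\|v\|=1}\langle v,L^{\mathbf x}v\rangle$. *)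

(* Defs.v *)
From HB Require Import structures.
From mathcomp Require Import all_boot all_order all_algebra.
From mathcomp Require Import all_classical all_reals all_analysis.
Set Implicit Arguments. Unset Strict Implicit. Unset Printing Implicit Defensive.
Import Order.TTheory GRing.Theory Num.Theory.
Import numFieldNormedType.Exports.
Local Open Scope classical_set_scope.
Local Open Scope ring_scope.

Definition dotv (R : realType) (d : nat) (u v : 'rV[R]_d) : R :=
  \sum_(k < d) u 0 k * v 0 k.

Definition dist2 (R : realType) (d : nat) (u v : 'rV[R]_d) : R :=
  dotv (u - v) (u - v).

Definition adjW (R : realType) (n d : nat) (f : R -> R) (x : 'I_n -> 'rV[R]_d)
  : 'M[R]_n :=
  \matrix_(i, j) (if i == j then 0 else f (dist2 (x i) (x j))).

Definition laplacian (R : realType) (n d : nat) (f : R -> R)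
  (x : 'I_n -> 'rV[R]_d) : 'M[R]_n :=
  \matrix_(i, j) ((i == j)%:R * (\sum_(k < n) adjW f x i k)) - adjW f x.

Definition lambda_max (R : realType) (n : nat) (M : 'M[R]_n) : R :=
  sup [set a : R | eigenvalue M a].

(* Main.v *)
Require Import Defs.
From HB Require Import structures.
From mathcomp Require Import all_boot all_order all_algebra.
From mathcomp Require Import all_classical all_reals all_analysis.
From mathcomp Require Import ring lra.
Set Implicit Arguments. Unset Strict Implicit. Unset Printing Implicit Defensive.
Import Order.TTheory GRing.Theory Num.Theory.
Import numFieldNormedType.Exports.
Local Open Scope classical_set_scope.
Local Open Scope ring_scope.

Section S.
Variable R : realType.
Variable n : nat.
Implicit Types (M : 'M[R]_n) (u w : 'I_n -> R).

Definition qf M u w := \sum_i \sum_j u i * M i j * w j.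
Definition ss u := \sum_i u i ^+ 2.
Definition RQ M := [set r : R | exists u, ss u != 0 /\ r = qf M u u / ss u].

Lemma ss_ge0 u : 0 <= ss u.
Proof. by apply: sumr_ge0 => i _; rewrite sqr_ge0. Qed.

Lemma sq_le_ss u k : u k ^+ 2 <= ss u.
Proof.
rewrite /ss (bigD1 k) //= lerDl; apply: sumr_ge0 => i _; exact: sqr_ge0.
Qed.

Lemma ss_eq0 u k : ss u = 0 -> u k = 0.
Proof.
move=> h; have := sq_le_ss u k; rewrite h => h2.
have : u k ^+ 2 = 0 by apply/le_anti; rewrite h2 sqr_ge0.
by move/eqP; rewrite sqrf_eq0 => /eqP.
Qed.

Lemma abs_mul_le u i j : `|u i| * `|u j| <= ss u.
Proof.
have hi := sq_le_ss u i; have hj := sq_le_ss u j.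
rewrite -real_normK ?num_real // in hi.
rewrite -real_normK ?num_real // in hj.
have ai := normr_ge0 (u i); have aj := normr_ge0 (u j).
case: (lerP `|u i| `|u j|) => h; nra.
Qed.

Definition Mb M := \sum_i \sum_j `|M i j|.

Lemma qf_bound M u : `|qf M u u| <= Mb M * ss u.
Proof.
rewrite /qf /Mb mulr_suml; apply: (le_trans (ler_norm_sum _ _ _)).
apply: ler_sum => i _; rewrite mulr_suml.
apply: (le_trans (ler_norm_sum _ _ _)); apply: ler_sum => j _.
rewrite !normrM [_ * `|M i j|]mulrC -mulrA.
by apply: ler_wpM2l => //; exact: abs_mul_le.
Qed.


Lemma qf_linl M a b u v w :
  qf M (fun i => a * u i + b * v i) w = a * qf M u w + b * qf M v w.
Proof.
rewrite /qf !mulr_sumr -big_split /=; apply: eq_bigr => i _.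
rewrite !mulr_sumr -big_split /=; apply: eq_bigr => j _; ring.
Qed.

Lemma qf_linr M a b u v w :
  qf M w (fun i => a * u i + b * v i) = a * qf M w u + b * qf M w v.
Proof.
rewrite /qf !mulr_sumr -big_split /=; apply: eq_bigr => i _.
rewrite !mulr_sumr -big_split /=; apply: eq_bigr => j _; ring.
Qed.

Lemma qf_sym M u w : (forall i j, M i j = M j i) -> qf M u w = qf M w u.
Proof.
move=> hs; rewrite /qf exchange_big; apply: eq_bigr => i _; apply: eq_bigr => j _.
by rewrite hs; ring.
Qed.

Lemma quad_disc (a b c : R) : 0 <= c -> (forall t, 0 <= a + 2 * t * b + t ^+ 2 * c) ->
  b ^+ 2 <= a * c.
Proof.
move=> hc key; rewrite le_eqVlt in hc; case/orP: hc => hc.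
  rewrite -(eqP hc) mulr0.
  have [hb|hb] := eqVneq b 0; first by rewrite hb expr0n.
  have h := key (- (a + 1) / (2 * b)).
  have e : 2 * (- (a + 1) / (2 * b)) * b = - (a + 1) by field.
  rewrite e -(eqP hc) mulr0 addr0 in h; lra.
have h := key (- b / c).
have e : a + 2 * (- b / c) * b + (- b / c) ^+ 2 * c = a - b ^+ 2 / c.
  by field; rewrite gt_eqF.
rewrite e subr_ge0 ler_pdivrMr // in h; by rewrite mulrC.
Qed.

Lemma qf_CS M u w : (forall i j, M i j = M j i) -> (forall v, 0 <= qf M v v) ->
  qf M u w ^+ 2 <= qf M u u * qf M w w.
Proof.
move=> hs hp.
have key : forall t, 0 <= qf M u u + 2 * t * qf M u w + t ^+ 2 * qf M w w.
  move=> t; have := hp (fun i => 1 * u i + t * w i).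
  rewrite qf_linl !qf_linr (qf_sym w u hs).
  move=> h; lra.
exact: quad_disc (hp w) key.
Qed.


Lemma qf0 M u : (forall i, u i = 0) -> qf M u u = 0.
Proof. by move=> h; rewrite /qf big1 // => i _; rewrite big1 // => j _; rewrite h !mul0r. Qed.

Lemma RQ_ub M : ubound (RQ M) (Mb M).
Proof.
move=> r [u [hs ->]].
have hp : 0 < ss u by rewrite lt_def hs ss_ge0.
rewrite ler_pdivrMr //; apply: le_trans (qf_bound M u); exact: ler_norm.
Qed.

Lemma RQ_n0 M : (0 < n)%N -> RQ M !=set0.
Proof.
move=> hn; exists (qf M (fun _ => 1) (fun _ => 1) / ss (fun _ => 1)).
exists (fun _ => 1); split => //.
rewrite /ss; under eq_bigr do rewrite expr1n.
by rewrite sumr_const card_ord pnatr_eq0 -lt0n.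
Qed.

Definition Sq M := sup (RQ M).

Lemma qf_le_S M u : (0 < n)%N -> qf M u u <= Sq M * ss u.
Proof.
move=> hn; have [h0|h0] := eqVneq (ss u) 0.
  by rewrite h0 mulr0 qf0 // => i; exact: ss_eq0.
have hp : 0 < ss u by rewrite lt_def h0 ss_ge0.
rewrite -ler_pdivrMr //; apply: ub_le_sup; first by exists (Mb M); exact: RQ_ub.
by exists u.
Qed.

Lemma eig_le_S M a : (0 < n)%N -> eigenvalue M a -> a <= Sq M.
Proof.
move=> hn /eigenvalueP [v hv vn0].
set u := fun i : 'I_n => v 0 i.
have hrow : forall j, \sum_i u i * M i j = a * u j.
  move=> j; have := congr1 (fun X : 'M[R]_(1,n) => X 0 j) hv; rewrite !mxE /= => <-.
  by apply: eq_bigr.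
have hq : qf M u u = a * ss u.
  rewrite /qf exchange_big /ss mulr_sumr; apply: eq_bigr => j _.
  by rewrite -mulr_suml hrow -mulrA expr2.
have h0 : ss u != 0.
  apply/negP => /eqP h; move/negP: vn0; apply; apply/eqP/matrixP => i j.
  rewrite (ord1 i) mxE; exact: (ss_eq0 j h).
have hp : 0 < ss u by rewrite lt_def h0 ss_ge0.
apply: ub_le_sup; first by exists (Mb M); exact: RQ_ub.
by exists u; split => //; rewrite hq mulfK.
Qed.


Lemma qf_sub M N u w : qf (M - N) u w = qf M u w - qf N u w.
Proof.
rewrite /qf -sumrB; apply: eq_bigr => i _; rewrite -sumrB; apply: eq_bigr => j _.
rewrite !mxE; ring.
Qed.

Lemma qf_opp M u w : qf (- M) u w = - qf M u w.
Proof.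
rewrite /qf -sumrN; apply: eq_bigr => i _; rewrite -sumrN; apply: eq_bigr => j _.
rewrite !mxE; ring.
Qed.

Lemma sum_delta (i : 'I_n) (u : 'I_n -> R) :
  \sum_k (1 *+ (i == k)) * u k = u i.
Proof.
rewrite (bigD1 i) //= eqxx mul1r big1 ?addr0 // => k hk.
by rewrite eq_sym (negbTE hk) mul0r.
Qed.

Lemma qf_scal a u : qf (a%:M) u u = a * ss u.
Proof.
rewrite /qf /ss mulr_sumr; apply: eq_bigr => i _.
under eq_bigr do rewrite mxE.
rewrite (bigD1 i) //= eqxx big1 ?addr0 => [|j hj]; last first.
  by rewrite eq_sym (negbTE hj) mulr0n mulr0 mul0r.
rewrite mulr1n expr2; ring.
Qed.

Lemma Mb_ge0 M : 0 <= Mb M.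
Proof. by apply: sumr_ge0 => i _; apply: sumr_ge0 => j _. Qed.

Lemma S_eig M : (0 < n)%N -> (forall i j, M i j = M j i) -> eigenvalue M (Sq M).
Proof.
move=> hn hs; apply: contraT => hne.
rewrite /eigenvalue /eigenspace negbK kermx_eq0 row_free_unit in hne.
set S := Sq M in hne *.
set A := M - S%:M in hne.
set B := invmx A.
have hAB : A *m B = 1%:M by exact: mulmxV.
set K := Mb B.
have hK : 0 <= K by exact: Mb_ge0.
have hN : forall v, 0 <= qf (- A) v v.
  move=> v; rewrite qf_opp qf_sub qf_scal; have := qf_le_S M v hn; rewrite -/S; lra.
have hNs : forall i j, (- A) i j = (- A) j i.
  by move=> i j; rewrite !mxE hs eq_sym.
have hub : ubound (RQ M) (S - (K + 1)^-1).
  move=> r [u [h0 ->]].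
  have hp : 0 < ss u by rewrite lt_def h0 ss_ge0.
  set w := fun j => \sum_k B j k * u k.
  have hrow : forall i, \sum_j A i j * w j = u i.
    move=> i; rewrite /w.
    under eq_bigr do rewrite mulr_sumr.
    rewrite exchange_big /=.
    transitivity (\sum_k (A *m B) i k * u k).
      apply: eq_bigr => k _; rewrite mxE mulr_suml; apply: eq_bigr => j _; ring.
    rewrite hAB; under eq_bigr do rewrite mxE; exact: sum_delta.
  have hqv : forall v, qf A v w = \sum_i v i * u i.
    move=> v; rewrite /qf; apply: eq_bigr => i _; rewrite -hrow mulr_sumr.
    by apply: eq_bigr => j _; rewrite mulrA.
  have hww : \sum_i w i * u i = qf B u u.
    rewrite /qf; apply: eq_bigr => i _; rewrite /w mulr_suml.
    by apply: eq_bigr => k _; ring.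
  have hcs := qf_CS u w hNs hN.
  rewrite !qf_opp hqv hqv hww qf_sub qf_scal in hcs.
  have hss : \sum_i u i * u i = ss u by apply: eq_bigr => i _; rewrite expr2.
  rewrite hss in hcs.
  have hB : - qf B u u <= K * ss u.
    by apply: le_trans (qf_bound B u); rewrite -normrN; exact: ler_norm.
  have hX : 0 <= - (qf M u u - S * ss u) by have := qf_le_S M u hn; rewrite -/S; lra.
  set X := - (qf M u u - S * ss u) in hX hcs.
  have h1 : ss u ^+ 2 <= X * (K * ss u).
    apply: le_trans (ler_wpM2l hX hB); by rewrite sqrrN in hcs.
  have h2 : ss u <= X * K.
    rewrite -(ler_pM2r hp) -mulrA -expr2; exact: h1.
  have h3 : ss u <= X * (K + 1) by nra.
  rewrite ler_pdivrMr // mulrBl.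
  have hK1 : 0 < K + 1 by lra.
  have h4 : ss u / (K + 1) <= X by rewrite ler_pdivrMr.
  rewrite /X in h4; lra.
have := ge_sup (RQ_n0 M hn) hub; rewrite -/(Sq M) -/S.
have : 0 < (K + 1)^-1 by rewrite invr_gt0; lra.
lra.
Qed.


Lemma lmax_S M : (0 < n)%N -> (forall i j, M i j = M j i) -> lambda_max M = Sq M.
Proof.
move=> hn hs; rewrite /lambda_max; apply/le_anti/andP; split.
  apply: ge_sup; first by exists (Sq M); exact: S_eig.
  by move=> a ha; exact: eig_le_S.
apply: ub_le_sup; last exact: S_eig.
by exists (Sq M) => a ha; exact: eig_le_S.
Qed.


Definition dl (a : 'I_n) := fun i : 'I_n => ((i == a)%:R : R).
Definition df (a b : 'I_n) := fun i => 1 * dl a i + (-1) * dl b i.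

Lemma sum_delta' (i : 'I_n) (u : 'I_n -> R) :
  \sum_k (k == i)%:R * u k = u i.
Proof.
rewrite (bigD1 i) //= eqxx mul1r big1 ?addr0 // => k hk.
by rewrite (negbTE hk) mul0r.
Qed.

Lemma qf_delta M a b : qf M (dl a) (dl b) = M a b.
Proof.
rewrite /qf /dl.
transitivity (\sum_i (i == a)%:R * M i b).
  apply: eq_bigr => i _; rewrite -[RHS](sum_delta' b (fun j => (i == a)%:R * M i j)).
  by apply: eq_bigr => j _; ring.
exact: sum_delta'.
Qed.

Lemma qf_diff M a b : qf M (df a b) (df a b) = M a a - M a b - M b a + M b b.
Proof. rewrite /df qf_linl !qf_linr !qf_delta; ring. Qed.

Lemma ss_diff a b : a != b -> ss (df a b) = 2.
Proof.
move=> hab; rewrite /ss /df /dl (bigD1 a) //= (bigD1 b) 1?eq_sym //=.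
have hba : (b == a) = false by rewrite eq_sym (negbTE hab).
rewrite eqxx hba big1 => [|i /andP [hia hib]].
  rewrite addr0 eqxx /=; ring.
by rewrite (negbTE hia) (negbTE hib) /=; ring.
Qed.

Lemma cnt_eq : \sum_(a : 'I_n) \sum_(b : 'I_n) ((a != b)%:R : R) = n%:R * n%:R - n%:R.
Proof.
transitivity (\sum_(a : 'I_n) (n%:R - 1 : R)).
  apply: eq_bigr => a _.
  transitivity (\sum_(b : 'I_n) (1 - (b == a)%:R * 1 : R)).
    by apply: eq_bigr => b _; rewrite eq_sym; case: (b == a) => /=; ring.
  by rewrite sumrB sum_delta' sumr_const card_ord.
rewrite sumr_const card_ord -mulr_natr; ring.
Qed.

Lemma trace_bound M : (0 < n)%N -> (forall i j, M i j = M j i) ->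
  (forall a, \sum_b M a b = 0) ->
  n%:R * (\sum_a M a a) <= Sq M * (n%:R * n%:R - n%:R).
Proof.
move=> hn hs hr.
have hS0 : 0 <= Sq M.
  have := qf_le_S M (fun _ => 1) hn.
  have -> : qf M (fun _ => 1) (fun _ => 1) = 0.
    rewrite /qf big1 // => i _; rewrite -[RHS](hr i); apply: eq_bigr => j _; ring.
  have -> : ss (fun _ => 1) = n%:R.
    by rewrite /ss; under eq_bigr do rewrite expr1n; rewrite sumr_const card_ord.
  move=> h; rewrite -(@pmulr_rge0 _ n%:R) ?ltr0n // mulrC //.
have hab : forall a b, M a a + M b b - 2 * M a b <= 2 * Sq M * (a != b)%:R.
  move=> a b; have [->|hne] := eqVneq a b; first by rewrite /=; lra.
  have := qf_le_S M (df a b) hn; rewrite qf_diff ss_diff // (hs b a) /=; lra.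
have : \sum_(a : 'I_n) \sum_(b : 'I_n) (M a a + M b b - 2 * M a b) <= \sum_(a : 'I_n) \sum_(b : 'I_n) (2 * Sq M * (a != b)%:R).
  by apply: ler_sum => a _; apply: ler_sum => b _; exact: hab.
have e1 : forall a : 'I_n, \sum_(b : 'I_n) (M a a + M b b - 2 * M a b)
    = n%:R * M a a + \sum_b M b b - 2 * \sum_b M a b.
  by move=> a; rewrite sumrB big_split /= sumr_const card_ord -mulr_sumr -[M a a *+ n]mulr_natl.
have e2 : forall a : 'I_n, \sum_(b : 'I_n) (2 * Sq M * (a != b)%:R)
    = 2 * Sq M * \sum_(b : 'I_n) (a != b)%:R.
  by move=> a; rewrite mulr_sumr.
under eq_bigr do rewrite e1 hr mulr0 subr0.
under [X in _ <= X -> _]eq_bigr do rewrite e2.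
rewrite -mulr_sumr cnt_eq big_split /= sumr_const card_ord -mulr_sumr -mulr_natl.
move=> h; lra.
Qed.

Lemma S_ge0 M : (0 < n)%N -> (forall a, \sum_b M a b = 0) -> 0 <= Sq M.
Proof.
move=> hn hr.
have := qf_le_S M (fun _ => 1) hn.
have -> : qf M (fun _ => 1) (fun _ => 1) = 0.
  rewrite /qf big1 // => i _; rewrite -[RHS](hr i); apply: eq_bigr => j _; ring.
have -> : ss (fun _ => 1) = n%:R.
  by rewrite /ss; under eq_bigr do rewrite expr1n; rewrite sumr_const card_ord.
move=> h; rewrite -(@pmulr_rge0 _ n%:R) ?ltr0n // mulrC //.
Qed.

Lemma qf_const c u : qf (const_mx c) u u = c * (\sum_i u i) ^+ 2.
Proof.
rewrite /qf expr2 mulr_suml mulr_sumr; apply: eq_bigr => i _.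
rewrite !mulr_sumr; apply: eq_bigr => j _; rewrite mxE; ring.
Qed.

Lemma sum_sq_le u : (\sum_i u i) ^+ 2 <= n%:R * ss u.
Proof.
have h : 0 <= \sum_(i : 'I_n) \sum_(j : 'I_n) (u i - u j) ^+ 2.
  by apply: sumr_ge0 => i _; apply: sumr_ge0 => j _; exact: sqr_ge0.
have e : \sum_(i : 'I_n) \sum_(j : 'I_n) (u i - u j) ^+ 2
    = 2 * (n%:R * ss u) - 2 * (\sum_i u i) ^+ 2.
  transitivity (\sum_(i : 'I_n) (n%:R * u i ^+ 2 + ss u - 2 * u i * \sum_j u j)).
    apply: eq_bigr => i _.
    have -> : \sum_(j : 'I_n) (u i - u j) ^+ 2
      = \sum_(j : 'I_n) (u i ^+ 2 + u j ^+ 2 - 2 * u i * u j).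
      by apply: eq_bigr => j _; ring.
    rewrite sumrB big_split /= sumr_const card_ord -mulr_sumr -[_ *+ n]mulr_natl //.
  rewrite sumrB big_split /= -mulr_sumr sumr_const card_ord -mulr_suml -mulr_sumr -/(ss u) -[_ *+ n]mulr_natl; ring.
rewrite e in h; lra.
Qed.

End S.

Section G.
Variable R : realType.
Variable d : nat.
Implicit Types u v : 'rV[R]_d.

Lemma dotvC u v : dotv u v = dotv v u.
Proof. by apply: eq_bigr => k _; rewrite mulrC. Qed.

Lemma dist2_expand u v : dist2 u v = dotv u u - 2 * dotv u v + dotv v v.
Proof.
rewrite /dist2 /dotv mulr_sumr -sumrB -big_split /=; apply: eq_bigr => k _.
rewrite !mxE; ring.
Qed.

Lemma dotv_plus u v : dotv (u + v) (u + v) = dotv u u + 2 * dotv u v + dotv v v.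
Proof.
rewrite /dotv mulr_sumr -!big_split /=; apply: eq_bigr => k _.
rewrite !mxE; ring.
Qed.

Lemma dotv_self_ge0 u : 0 <= dotv u u.
Proof. by apply: sumr_ge0 => k _; rewrite -expr2 sqr_ge0. Qed.

Lemma dist2_ge0 u v : 0 <= dist2 u v.
Proof. exact: dotv_self_ge0. Qed.

Lemma dist2_eq0 u v : dist2 u v = 0 -> u = v.
Proof.
move=> h; apply/matrixP => i k; rewrite (ord1 i).
have : (u - v) 0 k ^+ 2 = 0.
  apply/le_anti; rewrite sqr_ge0 andbT -h /dist2 /dotv (bigD1 k) //= -expr2 lerDl.
  by apply: sumr_ge0 => j _; rewrite -expr2 sqr_ge0.
by move/eqP; rewrite sqrf_eq0 !mxE subr_eq0 => /eqP.
Qed.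

Lemma dist2_sym u v : dist2 u v = dist2 v u.
Proof. by rewrite !dist2_expand (dotvC v u); ring. Qed.

Lemma dist2_le4 u v : dotv u u = 1 -> dotv v v = 1 -> dist2 u v <= 4.
Proof.
move=> hu hv; have := dotv_self_ge0 (u + v); rewrite dotv_plus dist2_expand hu hv.
lra.
Qed.

Lemma sum_dot_ge0 n (x : 'I_n -> 'rV[R]_d) :
  0 <= \sum_i \sum_j dotv (x i) (x j).
Proof.
have -> : \sum_i \sum_j dotv (x i) (x j) = \sum_k (\sum_i x i 0 k) ^+ 2.
  rewrite /dotv.
  transitivity (\sum_i \sum_k \sum_j x i 0 k * x j 0 k).
    by apply: eq_bigr => i _; rewrite exchange_big.
  rewrite exchange_big; apply: eq_bigr => k _.
  rewrite expr2 mulr_suml; apply: eq_bigr => i _; by rewrite mulr_sumr.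
by apply: sumr_ge0 => k _; rewrite sqr_ge0.
Qed.

End G.

Section J.
Variable R : realType.
Variable f : R -> R.
Hypothesis hconv : forall s t l, s \in `]0, 4] -> t \in `]0, 4] -> 0 <= l <= 1 ->
     f (l * s + (1 - l) * t) <= l * f s + (1 - l) * f t.

Lemma jensen (s : seq R) : (0 < size s)%N -> (forall a, a \in s -> 0 < a <= 4) ->
  0 < (\sum_(a <- s) a) / (size s)%:R <= 4 /\
  f ((\sum_(a <- s) a) / (size s)%:R) <= (\sum_(a <- s) f a) / (size s)%:R.
Proof.
elim: s => [//|a s IH] _ hin.
have ha : 0 < a <= 4 by apply: hin; rewrite inE eqxx.
rewrite !big_cons /=.
have [hs0|hs0] := eqVneq (size s) 0%N.
  rewrite hs0; case: s IH hin hs0 => // _ _ _; rewrite !big_nil !addr0 divr1.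
  by split => //; rewrite divr1.
have hs : (0 < size s)%N by rewrite lt0n.
have [hm hf] := IH hs (fun b hb => hin b (mem_behead (s := a :: s) hb)).
set K := (size s)%:R in hm hf *.
have hK : 0 < K by rewrite ltr0n.
have -> : ((size s).+1%:R : R) = K + 1 by rewrite -addn1 natrD.
set Sm := \sum_(b <- s) b in hm hf *.
set Sf := \sum_(b <- s) f b in hf *.
set l := (K + 1)^-1.
have hl : 0 < l <= 1.
  rewrite /l invr_gt0 invf_le1 //; lra.
have e : (a + Sm) / (K + 1) = l * a + (1 - l) * (Sm / K).
  rewrite /l; field; apply/andP; split; rewrite gt_eqF //; lra.
have e2 : (f a + Sf) / (K + 1) = l * f a + (1 - l) * (Sf / K).
  rewrite /l; field; apply/andP; split; rewrite gt_eqF //; lra.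
rewrite e e2; split.
  set m := Sm / K in hm *; case/andP: hl => hl0 hl1; case/andP: ha => ha0 ha4.
  case/andP: hm => hm0 hm4; apply/andP; split; nra.
have hl' : 0 <= l <= 1 by case/andP: hl => hl0 hl1; apply/andP; split; lra.
have h1 : a \in `]0, 4] by rewrite in_itv /=.
have h2 : Sm / K \in `]0, 4] by rewrite in_itv /=.
apply: (le_trans (hconv h1 h2 hl')).
apply: lerD => //; apply: ler_wpM2l => //; case/andP: hl => _ hl1; lra.
Qed.


Lemma sumr1_size (s : seq R) : \sum_(a <- s) (1 : R) = (size s)%:R.
Proof.
elim: s => [|a s IH]; first by rewrite big_nil.
by rewrite big_cons IH /= -addn1 natrD addrC.
Qed.

Lemma pairs_sum n (g : R -> R) (dd : 'I_n -> 'I_n -> R) :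
  \sum_(a <- [seq dd p.1 p.2 | p <- enum [pred p : 'I_n * 'I_n | p.1 != p.2]]) g a
  = \sum_a \sum_(b | a != b) g (dd a b).
Proof.
rewrite big_map big_enum pair_big_dep /=; apply: eq_bigl => p; by rewrite inE.
Qed.

Lemma jensen_pairs n (dd : 'I_n -> 'I_n -> R) : (1 < n)%N ->
  (forall a b, a != b -> 0 < dd a b <= 4) ->
  0 < (\sum_a \sum_(b | a != b) dd a b) / (n%:R * n%:R - n%:R) <= 4 /\
  (n%:R * n%:R - n%:R) * f ((\sum_a \sum_(b | a != b) dd a b) / (n%:R * n%:R - n%:R))
   <= \sum_a \sum_(b | a != b) f (dd a b).
Proof.
move=> hn hd.
set s := [seq dd p.1 p.2 | p <- enum [pred p : 'I_n * 'I_n | p.1 != p.2]].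
have hsz : (size s)%:R = (n%:R * n%:R - n%:R : R).
  have := pairs_sum (fun _ => 1) dd; rewrite sumr1_size -/s => ->.
  rewrite -(cnt_eq R n); apply: eq_bigr => a _; rewrite big_mkcond /=.
  by apply: eq_bigr => b _; case: (a != b).
have hN : 0 < (n%:R * n%:R - n%:R : R).
  have : (2 : R) <= n%:R by rewrite ler_nat.
  nra.
have hsz0 : (0 < size s)%N by rewrite -(ltr0n R) hsz.
have hin : forall a, a \in s -> 0 < a <= 4.
  move=> a /mapP [p hp ->]; apply: hd; by rewrite mem_enum inE in hp.
have [hm hf] := jensen hsz0 hin.
have e1 := pairs_sum id dd; have e2 := pairs_sum f dd.
rewrite -/s /= in e1 e2.
rewrite e1 e2 hsz in hm hf.
split => //.
by rewrite mulrC -ler_pdivlMr.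
Qed.

End J.

Section L.
Variable R : realType.
Variables (n d : nat) (f : R -> R) (z : 'I_n -> 'rV[R]_d).

Lemma W_E i j : adjW f z i j = if i == j then 0 else f (dist2 (z i) (z j)).
Proof. by rewrite mxE. Qed.

Lemma L_E i j : laplacian f z i j = (i == j)%:R * (\sum_k adjW f z i k) - adjW f z i j.
Proof. by rewrite /laplacian !mxE. Qed.

Lemma L_sym i j : laplacian f z i j = laplacian f z j i.
Proof.
rewrite !L_E; have [->|hij] := eqVneq i j; first by [].
have hji : (j == i) = false by rewrite eq_sym (negbTE hij).
rewrite !W_E (negbTE hij) hji dist2_sym /= !mul0r; ring.
Qed.

Lemma L_row a : \sum_b laplacian f z a b = 0.
Proof.
under eq_bigr do rewrite L_E.
rewrite sumrB.
have -> : \sum_(b : 'I_n) (a == b)%:R * \sum_k adjW f z a k = \sum_k adjW f z a k.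
  rewrite -[RHS](sum_delta' a (fun _ => \sum_k adjW f z a k)).
  by apply: eq_bigr => b _; rewrite eq_sym.
by rewrite subrr.
Qed.

Lemma L_diag a : laplacian f z a a = \sum_(b | a != b) f (dist2 (z a) (z b)).
Proof.
rewrite L_E eqxx mul1r W_E eqxx subr0.
rewrite [RHS]big_mkcond; apply: eq_bigr => b _; rewrite W_E; by case: (a == b).
Qed.

End L.

Unset Implicit Arguments.
Set Strict Implicit.

Theorem proposition3p3 (R : realType) (n : nat) (f : R -> R) :
  (3 <= n)%N ->
  {in `]0, 4[, forall t, derivable f t 1} ->
  cvg ((fun h : R => h^-1 * (f (4 + h) - f 4)) @ 0^'-) ->
  {in `]0, 4] &, forall s t, s <= t -> f t <= f s} ->
  (forall s t l, s \in `]0, 4] -> t \in `]0, 4] -> 0 <= l <= 1 ->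
     f (l * s + (1 - l) * t) <= l * f s + (1 - l) * f t) ->
  forall y : 'I_n -> 'rV[R]_n.-1,
  (forall i, dotv (y i) (y i) = 1) ->
  (forall i j, i != j -> dotv (y i) (y j) = - (n.-1%:R)^-1) ->
  forall x : 'I_n -> 'rV[R]_n.-1,
  (forall i, dotv (x i) (x i) = 1) ->
  injective x ->
  lambda_max (laplacian f y) <= lambda_max (laplacian f x).
Proof.
move=> hn3 _ _ hdec hconv y hy1 hy2 x hx1 hxinj.
have hn0 : (0 < n)%N by apply: leq_trans hn3.
have hn1 : (1 < n)%N by apply: leq_trans hn3.
rewrite !lmax_S //; try exact: L_sym.
set m : R := (n.-1)%:R.
have hnm : (n%:R : R) = m + 1.
  have e : n = (n.-1 + 1)%N by rewrite addn1 prednK.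
  by rewrite {1}e natrD.
have hm2 : 2 <= m by rewrite /m ler_nat -ltnS prednK.
set t0 := 2 + 2 / m.
have ht0 : 0 < t0 <= 4.
  have : 0 < m^-1 <= 2^-1.
    apply/andP; split; first by rewrite invr_gt0; lra.
    rewrite lef_pV2 ?posrE //; lra.
  rewrite /t0; lra.
have hyd : forall i j, i != j -> dist2 (y i) (y j) = t0.
  by move=> i j hij; rewrite dist2_expand !hy1 hy2 // /t0 -/m; field; rewrite gt_eqF //; lra.
set c := f t0.
have hLy : laplacian f y = (n%:R * c)%:M - const_mx c.
  apply/matrixP => i j; rewrite L_E !mxE.
  have -> : \sum_k adjW f y i k = n%:R * c - c.
    transitivity (\sum_(k : 'I_n) (c - (k == i)%:R * c)).
      apply: eq_bigr => k _; rewrite W_E; case: (boolP (i == k)) => hk.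
        by rewrite (eqP hk) eqxx /= mul1r subrr.
      have hki : (k == i) = false by rewrite eq_sym (negbTE hk).
      by rewrite hki hyd //= mul0r subr0.
    by rewrite sumrB sum_delta' sumr_const card_ord mulr_natl.
  case: (boolP (i == j)) => hij; rewrite ?hij ?(negbTE hij) /=; first by rewrite mulr1n mul1r subr0.
  by rewrite mulr0n mul0r hyd // sub0r add0r.
have hqy : forall u, qf (laplacian f y) u u = n%:R * c * ss u - c * (\sum_i u i) ^+ 2.
  by move=> u; rewrite hLy qf_sub qf_scal qf_const.
have hS0 : 0 <= Sq (laplacian f x) := S_ge0 hn0 (L_row f x).
have hd : forall a b, a != b -> 0 < dist2 (x a) (x b) <= 4.
  move=> a b hab; rewrite dist2_le4 // andbT lt_def dist2_ge0 andbT.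
  apply/eqP => /dist2_eq0 /hxinj /eqP; exact/negP.
have [hmean hjen] := jensen_pairs hconv hn1 hd.
set N : R := n%:R * n%:R - n%:R in hmean hjen.
set Sd := \sum_a \sum_(b | a != b) dist2 (x a) (x b) in hmean hjen.
have hN : 0 < N by rewrite /N hnm; nra.
have hSd : Sd <= 2 * (n%:R * n%:R).
  have h1 : Sd <= \sum_(a : 'I_n) \sum_(b : 'I_n) dist2 (x a) (x b).
    apply: ler_sum => a _; rewrite [X in _ <= X](bigID (fun b => a != b)) /= lerDl.
    by apply: sumr_ge0 => b _; exact: dist2_ge0.
  have h2 : \sum_(a : 'I_n) \sum_(b : 'I_n) dist2 (x a) (x b)
      = 2 * (n%:R * n%:R) - 2 * \sum_a \sum_b dotv (x a) (x b).
    transitivity (\sum_(a : 'I_n) (2 * n%:R - 2 * \sum_b dotv (x a) (x b))).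
      apply: eq_bigr => a _.
      transitivity (\sum_(b : 'I_n) (2 - 2 * dotv (x a) (x b))).
        by apply: eq_bigr => b _; rewrite dist2_expand !hx1; ring.
      by rewrite sumrB sumr_const card_ord -mulr_sumr -[2 *+ n]mulr_natr.
    rewrite sumrB sumr_const card_ord -mulr_sumr -[_ *+ n]mulr_natr; ring.
  have := sum_dot_ge0 x; lra.
have hmt : Sd / N <= t0.
  rewrite ler_pdivrMr //; apply: (le_trans hSd); rewrite /t0 /N hnm.
  rewrite le_eqVlt; apply/orP; left; apply/eqP; field; rewrite gt_eqF //; lra.
have hfc : c <= f (Sd / N).
  apply: hdec; [by rewrite in_itv /=; exact: hmean | by rewrite in_itv /=; exact: ht0 | exact: hmt].
have htb := trace_bound hn0 (L_sym f x) (L_row f x).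
have etr : \sum_a laplacian f x a a = \sum_a \sum_(b | a != b) f (dist2 (x a) (x b)).
  by apply: eq_bigr => a _; exact: L_diag.
rewrite etr -/N in htb.
have hx : n%:R * c <= Sq (laplacian f x).
  have hn' : 0 < (n%:R : R) by rewrite ltr0n.
  have h3 : N * c <= \sum_a \sum_(b | a != b) f (dist2 (x a) (x b)).
    apply: le_trans hjen; apply: ler_wpM2l => //; lra.
  have h4 : n%:R * (N * c) <= Sq (laplacian f x) * N.
    apply: le_trans htb; apply: ler_wpM2l => //; lra.
  rewrite -(ler_pM2r hN); lra.
have hyb : forall B, (forall u, qf (laplacian f y) u u <= B * ss u) ->
    Sq (laplacian f y) <= B.
  move=> B hB; apply: ge_sup; first exact: RQ_n0.
  move=> r [u [h0 ->]]; have hp : 0 < ss u by rewrite lt_def h0 ss_ge0.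
  by rewrite ler_pdivrMr.
have hsq := sum_sq_le.
have [hc|hc] := lerP 0 c.
  apply: le_trans hx; apply: hyb => u; rewrite hqy.
  have := sqr_ge0 (\sum_i u i); nra.
apply: le_trans hS0; apply: hyb => u; rewrite hqy mul0r.
have := hsq _ _ u; rewrite hnm; have := ss_ge0 u; nra.
Qed.
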